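(* Let $\Gamma\subset\mathbb{R}^2$ be a simple closed curve such that every set of $6$ points of $\Gamma$ is in c.s.c. position. If $\ell$ and $\ell'$ are two distinct parallel supporting lines of $\Gamma$, then $\ell\cap\Gamma$ and $\ell'\cap\Gamma$ are segments (possibly degenerate, i.e. single points, regarded as segments of length zero) of equal length.
   Context: A set of points in $\mathbb{R}^2$ is in c.s.c. position if it is contained in the boundary of a centrally symmetric convex body. Under the hypothesis, $\Gamma$ is the boundary of a convex body. A supporting line of $\Gamma$ is a line meeting $\Gamma$ such that $\Gamma$ lies in one of the closed half-planes it determines. *)

(* Defs.v *)
From Stdlib Require Import Reals Lra List.
Open Scope R_scope.

Definition pt := (R * R)%type.

Definition padd (p q : pt) : pt := (fst p + fst q, snd p + snd q).
Definition psub (p q : pt) : pt := (fst p - fst q, snd p - snd q).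
Definition pscale (t : R) (p : pt) : pt := (t * fst p, t * snd p).
Definition dot (p q : pt) : R := fst p * fst q + snd p * snd q.
Definition dist2 (p q : pt) : R := sqrt (Rsqr (fst p - fst q) + Rsqr (snd p - snd q)).

Definition in_interior (K : pt -> Prop) (p : pt) : Prop :=
  exists eps, 0 < eps /\ forall q, dist2 p q < eps -> K q.
Definition in_closure (K : pt -> Prop) (p : pt) : Prop :=
  forall eps, 0 < eps -> exists q, K q /\ dist2 p q < eps.
Definition in_boundary (K : pt -> Prop) (p : pt) : Prop :=
  in_closure K p /\ ~ in_interior K p.
Definition is_closed (K : pt -> Prop) : Prop :=
  forall p, in_closure K p -> K p.
Definition is_bounded (K : pt -> Prop) : Prop :=
  exists M, forall p, K p -> dist2 (0, 0) p <= M.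
Definition is_convex (K : pt -> Prop) : Prop :=
  forall p q t, K p -> K q -> 0 <= t <= 1 ->
    K (padd (pscale (1 - t) p) (pscale t q)).

Definition convex_body (K : pt -> Prop) : Prop :=
  is_convex K /\ is_closed K /\ is_bounded K /\ exists p, in_interior K p.

Definition centrally_symmetric (K : pt -> Prop) : Prop :=
  exists c : pt, forall p, K p -> K (psub (pscale 2 c) p).

Definition csc_position (S : pt -> Prop) : Prop :=
  exists K, convex_body K /\ centrally_symmetric K /\
    forall p, S p -> in_boundary K p.

Definition continuous_curve (g : R -> pt) : Prop :=
  forall t eps, 0 < eps -> exists delta, 0 < delta /\
    forall s, Rabs (s - t) < delta -> dist2 (g s) (g t) < eps.

(* Simple closed curve: image of a continuous 1-periodic map injective on [0,1)
   (i.e. a homeomorphic image of the circle). *)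
Definition simple_closed_curve (Gamma : pt -> Prop) : Prop :=
  exists g : R -> pt,
    continuous_curve g /\
    (forall t, g (t + 1) = g t) /\
    (forall s t, 0 <= s < 1 -> 0 <= t < 1 -> g s = g t -> s = t) /\
    (forall p, Gamma p <-> exists t, g t = p).

Definition is_line (l : pt -> Prop) : Prop :=
  exists (a : pt) (c : R), a <> (0, 0) /\ forall p, l p <-> dot a p = c.

Definition parallel (l l' : pt -> Prop) : Prop :=
  exists (a : pt) (c c' : R), a <> (0, 0) /\
    (forall p, l p <-> dot a p = c) /\ (forall p, l' p <-> dot a p = c').

Definition same_set (A B : pt -> Prop) : Prop := forall p, A p <-> B p.

Definition supporting_line (l Gamma : pt -> Prop) : Prop :=
  is_line l /\ (exists p, l p /\ Gamma p) /\
  exists (a : pt) (c : R), a <> (0, 0) /\ (forall p, l p <-> dot a p = c) /\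
    ((forall p, Gamma p -> dot a p <= c) \/ (forall p, Gamma p -> c <= dot a p)).

Definition segment (p q : pt) (x : pt) : Prop :=
  exists t, 0 <= t <= 1 /\ x = padd (pscale (1 - t) p) (pscale t q).

(* Main.v *)
Require Import Defs.
From Stdlib Require Import Reals List Lra Lia Classical.
Import ListNotations.
Open Scope R_scope.

Definition hh (a x : pt) : R := - snd a * fst x + fst a * snd x.
Definition Nn (a : pt) : R := fst a * fst a + snd a * snd a.
Definition Pt (a : pt) (c s : R) : pt :=
  ((fst a * c - snd a * s) / Nn a, (snd a * c + fst a * s) / Nn a).
Definition comb (t : R) (p q : pt) : pt := padd (pscale (1 - t) p) (pscale t q).

Lemma Nn_pos a : a <> (0,0) -> 0 < Nn a.
Proof.
  destruct a as [a1 a2]; unfold Nn; simpl; intros H.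
  destruct (Req_dec a1 0); destruct (Req_dec a2 0); subst; try (exfalso; apply H; reflexivity); nra.
Qed.

Lemma dot_comb a t p q : dot a (comb t p q) = (1 - t) * dot a p + t * dot a q.
Proof. unfold dot, comb, padd, pscale; simpl; ring. Qed.
Lemma hh_comb a t p q : hh a (comb t p q) = (1 - t) * hh a p + t * hh a q.
Proof. unfold hh, comb, padd, pscale; simpl; ring. Qed.

Lemma dot_Pt a c s : a <> (0,0) -> dot a (Pt a c s) = c.
Proof. intros H; pose proof (Nn_pos a H); unfold dot, Pt, Nn in *; destruct a; simpl in *; field; lra. Qed.
Lemma hh_Pt a c s : a <> (0,0) -> hh a (Pt a c s) = s.
Proof. intros H; pose proof (Nn_pos a H); unfold hh, Pt, Nn in *; destruct a; simpl in *; field; lra. Qed.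

Lemma pt_fh a x y : a <> (0,0) -> dot a x = dot a y -> hh a x = hh a y -> x = y.
Proof.
  intros H E1 E2; pose proof (Nn_pos a H) as HN.
  destruct a as [a1 a2], x as [x1 x2], y as [y1 y2]; unfold dot, hh, Nn in *; simpl in *.
  assert (A: (a1*a1+a2*a2)*(x1-y1) = a1*((a1*x1+a2*x2)-(a1*y1+a2*y2)) - a2*((-a2*x1+a1*x2)-(-a2*y1+a1*y2))) by ring.
  assert (B: (a1*a1+a2*a2)*(x2-y2) = a2*((a1*x1+a2*x2)-(a1*y1+a2*y2)) + a1*((-a2*x1+a1*x2)-(-a2*y1+a1*y2))) by ring.
  rewrite E1, E2 in A, B. replace (a1 * y1 + a2 * y2 - (a1 * y1 + a2 * y2)) with 0 in A, B by ring.
  replace (- a2 * y1 + a1 * y2 - (- a2 * y1 + a1 * y2)) with 0 in A, B by ring.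
  rewrite !Rmult_0_r, Rminus_0_r in A. rewrite !Rmult_0_r, Rplus_0_r in B.
  apply Rmult_integral in A; apply Rmult_integral in B.
  f_equal; lra.
Qed.

Lemma conv_in K p q t : is_convex K -> K p -> K q -> 0 <= t <= 1 -> K (comb t p q).
Proof. intros H; apply H. Qed.

Lemma abs_fst_le p q : Rabs (fst p - fst q) <= dist2 p q.
Proof.
  unfold dist2. rewrite <- sqrt_Rsqr_abs. apply sqrt_le_1_alt.
  pose proof (Rle_0_sqr (snd p - snd q)); lra.
Qed.
Lemma abs_snd_le p q : Rabs (snd p - snd q) <= dist2 p q.
Proof.
  unfold dist2. rewrite <- sqrt_Rsqr_abs. apply sqrt_le_1_alt.
  pose proof (Rle_0_sqr (fst p - fst q)); lra.
Qed.

Lemma cont_fst g : continuous_curve g -> continuity (fun t => fst (g t)).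
Proof.
  intros Hc t eps He. destruct (Hc t eps He) as [d [Hd H]].
  exists d; split; [lra|]. intros x [_ Hx]. simpl in *. unfold R_dist in *.
  pose proof (abs_fst_le (g x) (g t)). specialize (H x Hx). lra.
Qed.
Lemma cont_snd g : continuous_curve g -> continuity (fun t => snd (g t)).
Proof.
  intros Hc t eps He. destruct (Hc t eps He) as [d [Hd H]].
  exists d; split; [lra|]. intros x [_ Hx]. simpl in *. unfold R_dist in *.
  pose proof (abs_snd_le (g x) (g t)). specialize (H x Hx). lra.
Qed.

Lemma cont_lin g k1 k2 k0 : continuous_curve g ->
  continuity (fun t => k1 * fst (g t) + k2 * snd (g t) + k0).
Proof.
  intros Hc.
  assert (H1 := continuity_scal _ k1 (cont_fst g Hc)).
  assert (H2 := continuity_scal _ k2 (cont_snd g Hc)).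
  assert (H3 := continuity_plus _ _ H1 H2).
  assert (H4: continuity (fun _ => k0)) by (apply continuity_const; intros ? ?; reflexivity).
  exact (continuity_plus _ _ H3 H4).
Qed.

Lemma per_Z (g : R -> pt) : (forall t, g (t + 1) = g t) -> forall n t, g (t + IZR n) = g t.
Proof.
  intros Hp n. induction n using Z.peano_ind; intros t.
  - rewrite Rplus_0_r; reflexivity.
  - rewrite succ_IZR. replace (t + (IZR n + 1)) with ((t + IZR n) + 1) by ring.
    rewrite Hp; apply IHn.
  - unfold Z.pred; rewrite plus_IZR. rewrite <- (IHn t).
    replace (t + IZR n) with ((t + (IZR n - 1)) + 1) by ring. rewrite Hp; reflexivity.
Qed.

Lemma per_red (g : R -> pt) : (forall t, g (t + 1) = g t) -> forall t, exists s, 0 <= s < 1 /\ g s = g t.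
Proof.
  intros Hp t. destruct (archimed t) as [A B].
  exists (t + IZR (1 - up t)). split; [rewrite minus_IZR; simpl; lra|].
  apply per_Z; auto.
Qed.

Lemma cross_int K P1 Q1 P2 Q2 s t x :
  is_convex K -> K P1 -> K Q1 -> K P2 -> K Q2 -> 0 < s < 1 -> 0 < t < 1 ->
  x = comb s P1 Q1 -> x = comb t P2 Q2 ->
  (fst Q1 - fst P1) * (snd Q2 - snd P2) - (snd Q1 - snd P1) * (fst Q2 - fst P2) <> 0 ->
  in_interior K x.
Proof.
  intros HK H1 H2 H3 H4 Hs Ht Ex1 Ex2 HD.
  destruct P1 as [p1 p2], Q1 as [q1 q2], P2 as [r1 r2], Q2 as [w1 w2], x as [x1 x2].
  unfold comb, padd, pscale in Ex1, Ex2; simpl in *.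
  injection Ex1 as Ex1a Ex1b. injection Ex2 as Ex2a Ex2b.
  set (D := (q1 - p1) * (w2 - r2) - (q2 - p2) * (w1 - r1)) in *.
  set (m0 := Rmin (Rmin s (1-s)) (Rmin t (1-t))).
  assert (Hm0 : 0 < m0 /\ m0 <= s /\ m0 <= 1 - s /\ m0 <= t /\ m0 <= 1 - t).
  { unfold m0. repeat split.
    - repeat apply Rmin_glb_lt; lra.
    - eapply Rle_trans; [apply Rmin_l|apply Rmin_l].
    - eapply Rle_trans; [apply Rmin_l|apply Rmin_r].
    - eapply Rle_trans; [apply Rmin_r|apply Rmin_l].
    - eapply Rle_trans; [apply Rmin_r|apply Rmin_r]. }
  set (M := Rabs (q1 - p1) + Rabs (q2 - p2) + Rabs (w1 - r1) + Rabs (w2 - r2) + 1).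
  assert (HM : Rabs (q1 - p1) + Rabs (q2 - p2) + Rabs (w1 - r1) + Rabs (w2 - r2) + 1 = M) by reflexivity.
  assert (HMp : 0 < M).
  { pose proof (Rabs_pos (q1-p1)); pose proof (Rabs_pos (q2-p2));
    pose proof (Rabs_pos (w1-r1)); pose proof (Rabs_pos (w2-r2)); lra. }
  assert (HDp : 0 < Rabs D) by (apply Rabs_pos_lt; auto).
  exists (m0 * Rabs D / (2 * M)). split.
  { apply Rdiv_lt_0_compat; nra. }
  intros [y1 y2] Hq.
  pose proof (abs_fst_le (x1,x2) (y1,y2)) as A1. pose proof (abs_snd_le (x1,x2) (y1,y2)) as A2.
  simpl in A1, A2. rewrite Rabs_minus_sym in A1, A2.
  set (eps := m0 * Rabs D / (2 * M)) in *.
  assert (Heps: eps * M = m0 * Rabs D / 2) by (unfold eps; field; lra).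
  set (dx := y1 - x1) in *. set (dy := y2 - x2) in *.
  set (al := (dx * (w2 - r2) - dy * (w1 - r1)) / D).
  set (be := ((q1 - p1) * dy - (q2 - p2) * dx) / D).
  assert (Hal : Rabs al < m0 / 2).
  { unfold al. unfold Rdiv; rewrite Rabs_mult, Rabs_inv.
    assert (Hn : Rabs (dx * (w2 - r2) - dy * (w1 - r1)) < m0 * Rabs D / 2).
    { eapply Rle_lt_trans. apply Rabs_triang. rewrite Rabs_Ropp, !Rabs_mult.
      pose proof (Rabs_pos (w2 - r2)); pose proof (Rabs_pos (w1 - r1));
      pose proof (Rabs_pos (q1-p1)); pose proof (Rabs_pos (q2-p2)).
      pose proof (Rabs_pos dx); pose proof (Rabs_pos dy).
      assert (eps > 0) by (unfold eps; apply Rdiv_lt_0_compat; nra).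
      rewrite <- Heps, <- HM. nra. }
    apply (Rmult_lt_reg_r (Rabs D)); auto.
    rewrite Rmult_assoc, Rinv_l, Rmult_1_r by lra. nra. }
  assert (Hbe : Rabs be < m0 / 2).
  { unfold be. unfold Rdiv; rewrite Rabs_mult, Rabs_inv.
    assert (Hn : Rabs ((q1 - p1) * dy - (q2 - p2) * dx) < m0 * Rabs D / 2).
    { eapply Rle_lt_trans. apply Rabs_triang. rewrite Rabs_Ropp, !Rabs_mult.
      pose proof (Rabs_pos (w2 - r2)); pose proof (Rabs_pos (w1 - r1));
      pose proof (Rabs_pos (q1-p1)); pose proof (Rabs_pos (q2-p2)).
      pose proof (Rabs_pos dx); pose proof (Rabs_pos dy).
      assert (eps > 0) by (unfold eps; apply Rdiv_lt_0_compat; nra).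
      rewrite <- Heps, <- HM. nra. }
    apply (Rmult_lt_reg_r (Rabs D)); auto.
    rewrite Rmult_assoc, Rinv_l, Rmult_1_r by lra. nra. }
  apply Rabs_def2 in Hal. apply Rabs_def2 in Hbe.
  assert (E1 : al * (q1 - p1) + be * (w1 - r1) = dx) by (unfold al, be, D in *; field; auto).
  assert (E2 : al * (q2 - p2) + be * (w2 - r2) = dy) by (unfold al, be, D in *; field; auto).
  assert (K1 : K (comb (s + 2 * al) (p1,p2) (q1,q2))) by (apply conv_in; auto; lra).
  assert (K2 : K (comb (t + 2 * be) (r1,r2) (w1,w2))) by (apply conv_in; auto; lra).
  assert (K3 := conv_in K _ _ (1/2) HK K1 K2 ltac:(lra)).
  replace (y1, y2) with (comb (1/2) (comb (s + 2 * al) (p1,p2) (q1,q2)) (comb (t + 2 * be) (r1,r2) (w1,w2))); auto.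
  unfold comb, padd, pscale; simpl. f_equal.
  - unfold dx in E1. nra.
  - unfold dy in E2. nra.
Qed.

Lemma cross_fh a d1x d1y d2x d2y :
  Nn a * (d1x * d2y - d1y * d2x) =
  (fst a * d1x + snd a * d1y) * (- snd a * d2x + fst a * d2y)
  - (- snd a * d1x + fst a * d1y) * (fst a * d2x + snd a * d2y).
Proof. unfold Nn; ring. Qed.

Lemma tri_int K a y w v mu rho x :
  is_convex K -> a <> (0,0) -> K y -> K w -> K v -> 0 < mu < 1 -> 0 < rho < 1 ->
  x = comb rho y (comb mu w v) -> dot a y = dot a (comb mu w v) ->
  hh a y <> hh a (comb mu w v) -> dot a w <> dot a v -> in_interior K x.
Proof.
  intros HK Ha Hy Hw Hv Hmu Hrho Ex Ef Eh Efw.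
  pose proof (Nn_pos a Ha) as HN.
  assert (Ku : K (comb mu w v)) by (apply conv_in; auto; lra).
  apply (cross_int K (comb rho y w) (comb rho y v) y (comb mu w v) mu rho x HK).
  - apply conv_in; auto; lra.
  - apply conv_in; auto; lra.
  - auto.
  - auto.
  - lra.
  - lra.
  - rewrite Ex. destruct y, w, v; unfold comb, padd, pscale; simpl; f_equal; ring.
  - auto.
  - intros HD.
    rewrite dot_comb in Ef. rewrite hh_comb in Eh.
    destruct y as [y1 y2], w as [w1 w2], v as [v1 v2], a as [a1 a2].
    unfold comb, padd, pscale, dot, hh, Nn in *; simpl in *.
    set (D := ((1 - rho) * y1 + rho * v1 - ((1 - rho) * y1 + rho * w1)) *
     ((1 - mu) * w2 + mu * v2 - y2) -
     ((1 - rho) * y2 + rho * v2 - ((1 - rho) * y2 + rho * w2)) *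
     ((1 - mu) * w1 + mu * v1 - y1)) in HD.
    assert (E : (a1*a1+a2*a2) * D = rho * (((a1*v1+a2*v2) - (a1*w1+a2*w2)) *
       (((1-mu)*(-a2*w1+a1*w2) + mu*(-a2*v1+a1*v2)) - (-a2*y1+a1*y2))
       - ((-a2*v1+a1*v2) - (-a2*w1+a1*w2)) *
       (((1-mu)*(a1*w1+a2*w2) + mu*(a1*v1+a2*v2)) - (a1*y1+a2*y2)))) by (unfold D; ring).
    rewrite HD, Rmult_0_r, <- Ef in E.
    replace (a1 * y1 + a2 * y2 - (a1 * y1 + a2 * y2)) with 0 in E by ring.
    rewrite Rmult_0_r, Rminus_0_r in E.
    symmetry in E. apply Rmult_integral in E. destruct E as [E|E]; [lra|].
    apply Rmult_integral in E. destruct E as [E|E]; [apply Efw; lra | apply Eh; lra].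
Qed.

Lemma level_int K a k x y1 y2 w v :
  is_convex K -> a <> (0,0) -> K y1 -> K y2 -> K w -> K v ->
  dot a y1 = k -> dot a y2 = k -> dot a x = k ->
  hh a y1 < hh a x < hh a y2 -> k < dot a w -> dot a v < k -> in_interior K x.
Proof.
  intros HK Ha K1 K2 Kw Kv F1 F2 Fx Hh Fw Fv.
  set (mu := (dot a w - k) / (dot a w - dot a v)).
  assert (Hmu : 0 < mu < 1).
  { unfold mu; split; [apply Rdiv_lt_0_compat; lra|].
    apply (Rmult_lt_reg_r (dot a w - dot a v)); [lra|].
    unfold Rdiv; rewrite Rmult_assoc, Rinv_l, Rmult_1_r by lra. lra. }
  assert (Fu : dot a (comb mu w v) = k).
  { rewrite dot_comb; unfold mu; field; lra. }
  set (u := comb mu w v) in *.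
  destruct (total_order_T (hh a u) (hh a x)) as [[Hlt|Heq]|Hgt].
  - set (rho := (hh a y2 - hh a x) / (hh a y2 - hh a u)).
    assert (Hrho : 0 < rho < 1).
    { unfold rho; split; [apply Rdiv_lt_0_compat; lra|].
      apply (Rmult_lt_reg_r (hh a y2 - hh a u)); [lra|].
      unfold Rdiv; rewrite Rmult_assoc, Rinv_l, Rmult_1_r by lra. lra. }
    apply (tri_int K a y2 w v mu rho x HK Ha K2 Kw Kv Hmu Hrho).
    + apply (pt_fh a); auto.
      * fold u; rewrite dot_comb; rewrite ?Fx, ?F1, ?F2, ?Fu; ring.
      * fold u; rewrite hh_comb; unfold rho; field; lra.
    + fold u; lra.
    + fold u; lra.
    + lra.
  - assert (Exu : x = u) by (apply (pt_fh a); auto; lra).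
    set (t := (hh a x - hh a y1) / (hh a y2 - hh a y1)).
    assert (Ht : 0 < t < 1).
    { unfold t; split; [apply Rdiv_lt_0_compat; lra|].
      apply (Rmult_lt_reg_r (hh a y2 - hh a y1)); [lra|].
      unfold Rdiv; rewrite Rmult_assoc, Rinv_l, Rmult_1_r by lra. lra. }
    apply (cross_int K w v y1 y2 mu t x HK Kw Kv K1 K2 Hmu Ht); auto.
    + apply (pt_fh a); auto.
      * rewrite dot_comb; rewrite ?Fx, ?F1, ?F2; ring.
      * rewrite hh_comb; unfold t; field; lra.
    + intros HD. pose proof (Nn_pos a Ha) as HN.
      pose proof (cross_fh a (fst v - fst w) (snd v - snd w) (fst y2 - fst y1) (snd y2 - snd y1)) as C.
      rewrite HD, Rmult_0_r in C.
      destruct a as [a1 a2], v, w, y1, y2; unfold dot, hh in *; simpl in *.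
      assert (Z : a1 * (r5 - r3) + a2 * (r6 - r4) = 0) by lra.
      rewrite Z, Rmult_0_r, Rminus_0_r in C.
      symmetry in C; apply Rmult_integral in C; destruct C as [C|C]; lra.
  - set (rho := (hh a x - hh a y1) / (hh a u - hh a y1)).
    assert (Hrho : 0 < rho < 1).
    { unfold rho; split; [apply Rdiv_lt_0_compat; lra|].
      apply (Rmult_lt_reg_r (hh a u - hh a y1)); [lra|].
      unfold Rdiv; rewrite Rmult_assoc, Rinv_l, Rmult_1_r by lra. lra. }
    apply (tri_int K a y1 w v mu rho x HK Ha K1 Kw Kv Hmu Hrho).
    + apply (pt_fh a); auto.
      * fold u; rewrite dot_comb; rewrite ?Fx, ?F1, ?F2, ?Fu; ring.
      * fold u; rewrite hh_comb; unfold rho; field; lra.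
    + fold u; lra.
    + fold u; lra.
    + lra.
Qed.

Lemma dot_refl a o z : dot a (psub (pscale 2 o) z) = 2 * dot a o - dot a z.
Proof. unfold dot, psub, pscale; simpl; ring. Qed.
Lemma hh_refl a o z : hh a (psub (pscale 2 o) z) = 2 * hh a o - hh a z.
Proof. unfold hh, psub, pscale; simpl; ring. Qed.

Lemma chord K a c c0 p q m u v b o :
  is_convex K -> a <> (0,0) -> (forall z, K z -> K (psub (pscale 2 o) z)) ->
  K p -> K q -> K m -> K u -> K v -> K b ->
  ~ in_interior K m -> ~ in_interior K u -> ~ in_interior K v ->
  dot a p = c -> dot a q = c -> dot a m = c -> hh a p < hh a m < hh a q ->
  dot a u = c0 -> dot a v = c0 -> c0 < c -> dot a b < c0 -> hh a u <> hh a v ->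
  Rabs (hh a u - hh a v) < hh a q - hh a p -> False.
Proof.
  intros HK Ha Hs Kp Kq Km Ku Kv Kb Nm Nu Nv Fp Fq Fm Hm Fu Fv Hc0 Fb Huv Hlen.
  assert (Hup : forall w, K w -> dot a w <= c).
  { intros w Kw. destruct (Rle_or_lt (dot a w) c) as [H|H]; auto.
    exfalso; apply Nm. apply (level_int K a c m p q w u); auto; lra. }
  assert (Kpb := Hs p Kp). assert (Kqb := Hs q Kq). assert (Kbb := Hs b Kb).
  pose proof (Hup _ Kbb) as Hb. rewrite dot_refl in Hb.
  set (H := 2 * dot a o - c).
  set (lam := (c - c0) / (c - H)).
  assert (Hlam : 0 < lam < 1).
  { unfold lam, H; split; [apply Rdiv_lt_0_compat; lra|].
    apply (Rmult_lt_reg_r (c - (2 * dot a o - c))); [lra|].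
    unfold Rdiv; rewrite Rmult_assoc, Rinv_l, Rmult_1_r by lra. lra. }
  set (x1 := comb lam p (psub (pscale 2 o) q)).
  set (x2 := comb lam q (psub (pscale 2 o) p)).
  assert (K1 : K x1) by (apply conv_in; auto; lra).
  assert (K2 : K x2) by (apply conv_in; auto; lra).
  assert (F1 : dot a x1 = c0).
  { unfold x1; rewrite dot_comb, dot_refl, Fp, Fq. unfold lam, H in *; field; lra. }
  assert (F2 : dot a x2 = c0).
  { unfold x2; rewrite dot_comb, dot_refl, Fp, Fq. unfold lam, H in *; field; lra. }
  assert (Hx : hh a x2 - hh a x1 = hh a q - hh a p).
  { unfold x1, x2; rewrite !hh_comb, !hh_refl; ring. }
  assert (Fpc : c0 < dot a p) by lra.
  destruct (Rlt_or_le (hh a u) (hh a v)) as [Luv|Luv].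
  - rewrite Rabs_left in Hlen by lra.
    destruct (Rlt_or_le (hh a x1) (hh a u)) as [L1|L1].
    + apply Nu. apply (level_int K a c0 u x1 v p b); auto; lra.
    + apply Nv. apply (level_int K a c0 v u x2 p b); auto; lra.
  - assert (Luv' : hh a v < hh a u) by lra.
    rewrite Rabs_right in Hlen by lra.
    destruct (Rlt_or_le (hh a x1) (hh a v)) as [L1|L1].
    + apply Nv. apply (level_int K a c0 v x1 u p b); auto; lra.
    + apply Nu. apply (level_int K a c0 u v x2 p b); auto; lra.
Qed.

Definition sixH (Gamma : pt -> Prop) : Prop :=
  forall ps : list pt, length ps = 6%nat -> NoDup ps ->
     (forall p, In p ps -> Gamma p) -> csc_position (fun x => In x ps).

Definition ptdec (x y : pt) : {x = y} + {x <> y}.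
Proof. decide equality; apply Req_dec_T. Defined.

Lemma six_any (Gamma : pt -> Prop) (g : R -> pt) :
  (forall s t, 0 <= s < 1 -> 0 <= t < 1 -> g s = g t -> s = t) ->
  (forall p, Gamma p <-> exists t, g t = p) -> sixH Gamma ->
  forall ps : list pt, (length ps <= 6)%nat -> (forall p, In p ps -> Gamma p) ->
  exists K, convex_body K /\ centrally_symmetric K /\ forall p, In p ps -> in_boundary K p.
Proof.
  intros Hinj HG H6.
  set (L6 := [g 0; g (1/6); g (2/6); g (3/6); g (4/6); g (5/6)]).
  assert (ND6 : NoDup L6).
  { unfold L6.
    repeat (constructor; [simpl; intro HH;
      repeat match goal with HH : _ \/ _ |- _ => destruct HH as [HH|HH] end;
      try contradiction; apply Hinj in HH; lra |]).
    constructor. }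
  assert (G6 : forall z, In z L6 -> Gamma z).
  { intros z Hz; apply HG. unfold L6 in Hz; simpl in Hz.
    repeat (destruct Hz as [Hz|Hz]; [eexists; exact Hz|]). contradiction. }
  assert (Ext : forall n qs, NoDup qs -> (length qs + n = 6)%nat -> (forall p, In p qs -> Gamma p) ->
     exists rs, NoDup rs /\ length rs = 6%nat /\ incl qs rs /\ (forall p, In p rs -> Gamma p)).
  { induction n; intros qs Hnd Hl HGq.
    - exists qs; repeat split; auto. lia. apply incl_refl.
    - destruct (classic (exists z, In z L6 /\ ~ In z qs)) as [[z [Hz1 Hz2]]|Hno].
      + destruct (IHn (z :: qs)) as [rs [A [B [C D]]]].
        * constructor; auto.
        * simpl; lia.
        * intros p [<-|Hp]; auto.
        * exists rs; repeat split; auto. intros p Hp; apply C; simpl; auto.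
      + exfalso. assert (Hi : incl L6 qs).
        { intros z Hz. destruct (classic (In z qs)); auto. exfalso; apply Hno; eauto. }
        pose proof (NoDup_incl_length ND6 Hi). simpl in H. lia. }
  intros ps Hlen HGp.
  set (qs := nodup ptdec ps).
  assert (Hq1 : NoDup qs) by apply NoDup_nodup.
  assert (Hq2 : incl qs ps) by (intros z Hz; apply (nodup_In ptdec); auto).
  pose proof (NoDup_incl_length Hq1 Hq2) as Hq3.
  destruct (Ext (6 - length qs)%nat qs Hq1 ltac:(lia)) as [rs [A [B [C D]]]].
  { intros p Hp; apply HGp, Hq2, Hp. }
  destruct (H6 rs B A D) as [K [HK1 [HK2 HK3]]].
  exists K; split; [exact HK1|split; [exact HK2|]].
  intros p Hp. apply HK3. apply C. apply (nodup_In ptdec). auto.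
Qed.

Lemma two_cross_ord (g : R -> pt) (F : R -> R) :
  (forall t, g (t + 1) = g t) ->
  (forall s t, 0 <= s < 1 -> 0 <= t < 1 -> g s = g t -> s = t) ->
  continuity F -> (forall t, F (t + 1) = F t) ->
  forall s1 s2, 0 <= s1 -> s1 < s2 -> s2 < 1 -> F s1 * F s2 < 0 ->
  exists z1 z2, F z1 = 0 /\ F z2 = 0 /\ g z1 <> g z2.
Proof.
  intros Hp Hinj HF HFp s1 s2 H1 H12 H2 Hprod.
  assert (N1 : F s1 <> 0) by (intros E; rewrite E in Hprod; lra).
  assert (N2 : F s2 <> 0) by (intros E; rewrite E in Hprod; lra).
  destruct (IVT_cor F s1 s2 HF ltac:(lra) ltac:(lra)) as [z1 [Hz1 Fz1]].
  assert (P2 : F s2 * F (s1 + 1) <= 0) by (rewrite HFp; lra).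
  destruct (IVT_cor F s2 (s1 + 1) HF ltac:(lra) P2) as [z2 [Hz2 Fz2]].
  assert (z1 <> s1) by (intros E; subst; auto).
  assert (z1 <> s2) by (intros E; subst; auto).
  assert (z2 <> s2) by (intros E; subst; auto).
  assert (z2 <> s1 + 1) by (intros E; subst; rewrite HFp in Fz2; auto).
  exists z1, z2; repeat split; auto.
  intros E. destruct (Rlt_or_le z2 1) as [L|L].
  - apply Hinj in E; lra.
  - assert (E2 : g z2 = g (z2 - 1)) by (rewrite <- (Hp (z2 - 1)); f_equal; ring).
    rewrite E2 in E. apply Hinj in E; lra.
Qed.

Lemma two_cross (g : R -> pt) (F : R -> R) :
  (forall t, g (t + 1) = g t) ->
  (forall s t, 0 <= s < 1 -> 0 <= t < 1 -> g s = g t -> s = t) ->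
  continuity F -> (forall t, F (t + 1) = F t) ->
  forall ta tb, 0 <= ta < 1 -> 0 <= tb < 1 -> F ta * F tb < 0 ->
  exists z1 z2, F z1 = 0 /\ F z2 = 0 /\ g z1 <> g z2.
Proof.
  intros Hp Hinj HF HFp ta tb Ha Hb Hprod.
  destruct (total_order_T ta tb) as [[L|E]|L].
  - apply (two_cross_ord g F Hp Hinj HF HFp ta tb); lra.
  - subst. nra.
  - apply (two_cross_ord g F Hp Hinj HF HFp tb ta); lra.
Qed.

Lemma cont_ext (f1 f2 : R -> R) : continuity f1 -> (forall x, f1 x = f2 x) -> continuity f2.
Proof.
  intros H E x. apply (continuity_pt_locally_ext f1 f2 1 x); auto; lra.
Qed.

Lemma gamma_closed (Gamma : pt -> Prop) (g : R -> pt) :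
  continuous_curve g -> (forall t, g (t + 1) = g t) ->
  (forall p, Gamma p <-> exists t, g t = p) ->
  forall z, in_closure Gamma z -> Gamma z.
Proof.
  intros Hc Hp HG z Hz.
  set (d := fun t => (fst (g t) - fst z) * (fst (g t) - fst z) + (snd (g t) - snd z) * (snd (g t) - snd z)).
  assert (Cd : continuity d).
  { assert (C1 := cont_lin g 1 0 (- fst z) Hc). assert (C2 := cont_lin g 0 1 (- snd z) Hc).
    assert (C3 := continuity_plus _ _ (continuity_mult _ _ C1 C1) (continuity_mult _ _ C2 C2)).
    apply (cont_ext _ _ C3). intros s. unfold d, plus_fct, mult_fct. ring. }
  destruct (continuity_ab_min d 0 1 ltac:(lra) (fun c _ => Cd c)) as [t0 [Hmin Ht0]].
  assert (Hall : forall t, d t0 <= d t).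
  { intros t. destruct (per_red g Hp t) as [s [Hs Es]].
    replace (d t) with (d s) by (unfold d; rewrite Es; reflexivity). apply Hmin; lra. }
  apply HG. exists t0.
  destruct (Req_dec (d t0) 0) as [E|E].
  - unfold d in E; cbv beta in E. destruct (g t0) as [u1 u2], z as [z1 z2]; simpl in *.
    pose proof (Rle_0_sqr (u1 - z1)); pose proof (Rle_0_sqr (u2 - z2)); unfold Rsqr in *.
    assert (A1 : (u1 - z1) * (u1 - z1) = 0) by lra.
    assert (A2 : (u2 - z2) * (u2 - z2) = 0) by lra.
    apply Rmult_integral in A1; apply Rmult_integral in A2. destruct A1, A2; f_equal; lra.
  - exfalso.
    assert (D0 : 0 <= d t0) by (unfold d; cbv beta; pose proof (Rle_0_sqr (fst (g t0) - fst z));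
       pose proof (Rle_0_sqr (snd (g t0) - snd z)); unfold Rsqr in *; lra).
    assert (Dp : 0 < d t0) by lra.
    destruct (Hz (sqrt (d t0)) (sqrt_lt_R0 _ Dp)) as [q [Gq Dq]].
    apply HG in Gq. destruct Gq as [t Et]. subst q.
    unfold dist2 in Dq. apply sqrt_lt_0_alt in Dq.
    specialize (Hall t). unfold d, Rsqr in *; cbv beta in *.
    replace ((fst z - fst (g t)) * (fst z - fst (g t))) with ((fst (g t) - fst z) * (fst (g t) - fst z)) in Dq by ring.
    replace ((snd z - snd (g t)) * (snd z - snd (g t))) with ((snd (g t) - snd z) * (snd (g t) - snd z)) in Dq by ring.
    lra.
Qed.

Definition curveH (Gamma : pt -> Prop) (g : R -> pt) : Prop :=
  continuous_curve g /\ (forall t, g (t + 1) = g t) /\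
  (forall s t, 0 <= s < 1 -> 0 <= t < 1 -> g s = g t -> s = t) /\
  (forall p, Gamma p <-> exists t, g t = p).

Lemma bnd_K K p : convex_body K -> in_boundary K p -> K p.
Proof. intros [_ [Hc _]] [Hb _]. apply Hc, Hb. Qed.

Lemma getK Gamma g ps : curveH Gamma g -> sixH Gamma -> (length ps <= 6)%nat ->
  (forall p, In p ps -> Gamma p) ->
  exists K, is_convex K /\ (exists o, forall z, K z -> K (psub (pscale 2 o) z)) /\
    forall p, In p ps -> K p /\ ~ in_interior K p.
Proof.
  intros [Hc [Hp [Hi HG]]] H6 Hl Hin.
  destruct (six_any Gamma g Hi HG H6 ps Hl Hin) as [K [HK [Hs Hb]]].
  exists K; split; [apply HK|split; [exact Hs|]].
  intros p Hp'. split; [apply (bnd_K K p HK (Hb p Hp')) | apply (Hb p Hp')].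
Qed.

Lemma cont_hh g a k : continuous_curve g -> continuity (fun t => hh a (g t) + k).
Proof.
  intros Hc. apply (cont_ext _ _ (cont_lin g (- snd a) (fst a) k Hc)).
  intros; unfold hh; ring.
Qed.
Lemma cont_dot g a k : continuous_curve g -> continuity (fun t => dot a (g t) + k).
Proof.
  intros Hc. apply (cont_ext _ _ (cont_lin g (fst a) (snd a) k Hc)).
  intros; unfold dot; ring.
Qed.

Lemma param Gamma g x : curveH Gamma g -> Gamma x -> exists t, 0 <= t < 1 /\ g t = x.
Proof.
  intros [Hc [Hp [Hi HG]]] Gx. apply HG in Gx. destruct Gx as [t Et].
  destruct (per_red g Hp t) as [s [Hs Es]]. exists s; split; auto; congruence.
Qed.

Lemma step1_core Gamma g a c x y R1 R2 :
  curveH Gamma g -> sixH Gamma -> a <> (0,0) ->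
  Gamma x -> Gamma y -> Gamma R1 -> Gamma R2 ->
  dot a x = c -> dot a y = c -> dot a R2 < dot a R1 -> dot a R1 < c ->
  hh a R1 = hh a R2 -> hh a x < hh a R1 < hh a y -> False.
Proof.
  intros HC H6 Ha Gx Gy G1 G2 Fx Fy F12 F1c Eh Hh.
  destruct (getK Gamma g [x; y; R1; R2] HC H6) as [K [HK [[o Ho] Hb]]].
  { simpl; lia. }
  { intros p Hp; simpl in Hp; repeat destruct Hp as [<-|Hp]; auto; contradiction. }
  destruct (Hb x ltac:(simpl; auto)) as [Kx _].
  destruct (Hb y ltac:(simpl; auto)) as [Ky _].
  destruct (Hb R1 ltac:(simpl; auto)) as [K1 N1].
  destruct (Hb R2 ltac:(simpl; auto)) as [K2 _].
  set (k := dot a R1).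
  set (lam := (k - dot a R2) / (c - dot a R2)).
  assert (Hlam : 0 < lam < 1).
  { unfold lam; split; [apply Rdiv_lt_0_compat; unfold k in *; lra|].
    apply (Rmult_lt_reg_r (c - dot a R2)); [lra|].
    unfold Rdiv; rewrite Rmult_assoc, Rinv_l, Rmult_1_r by lra. unfold k; lra. }
  apply N1. apply (level_int K a k R1 (comb lam R2 x) (comb lam R2 y) x R2); auto.
  all: try (apply conv_in; auto; lra).
  all: try (rewrite dot_comb, Fx; unfold lam; field; lra).
  all: try (rewrite dot_comb, Fy; unfold lam; field; lra).
  all: try (rewrite !hh_comb; split; nra).
  all: unfold k; lra.
Qed.

Lemma step1_conv Gamma g a c x y z :
  curveH Gamma g -> sixH Gamma -> a <> (0,0) -> (forall w, Gamma w -> dot a w <= c) ->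
  Gamma x -> Gamma y -> dot a x = c -> dot a y = c -> dot a z = c ->
  hh a x < hh a z < hh a y -> Gamma z.
Proof.
  intros HC H6 Ha Hup Gx Gy Fx Fy Fz Hh.
  destruct (classic (Gamma z)) as [|Nz]; auto. exfalso.
  pose proof HC as [Hc [Hp [Hi HG]]].
  destruct (param Gamma g x HC Gx) as [tx [Htx Ex]].
  destruct (param Gamma g y HC Gy) as [ty [Hty Ey]].
  set (F := fun t => hh a (g t) + - hh a z).
  assert (CF : continuity F) by apply cont_hh, Hc.
  assert (PF : forall t, F (t + 1) = F t) by (intros; unfold F; rewrite Hp; reflexivity).
  assert (Pr : F tx * F ty < 0).
  { unfold F; rewrite Ex, Ey. nra. }
  destruct (two_cross g F Hp Hi CF PF tx ty Htx Hty Pr) as [z1 [z2 [F1 [F2 Ne]]]].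
  unfold F in F1, F2.
  assert (G1 : Gamma (g z1)) by (apply HG; eauto).
  assert (G2 : Gamma (g z2)) by (apply HG; eauto).
  pose proof (Hup _ G1) as U1. pose proof (Hup _ G2) as U2.
  assert (N1 : dot a (g z1) <> c).
  { intros E. apply Nz. replace z with (g z1); auto. apply (pt_fh a); auto; lra. }
  assert (N2 : dot a (g z2) <> c).
  { intros E. apply Nz. replace z with (g z2); auto. apply (pt_fh a); auto; lra. }
  destruct (total_order_T (dot a (g z1)) (dot a (g z2))) as [[L|E]|L].
  - apply (step1_core Gamma g a c x y (g z2) (g z1)); auto; lra.
  - apply Ne. apply (pt_fh a); auto; lra.
  - apply (step1_core Gamma g a c x y (g z1) (g z2)); auto; lra.
Qed.

Lemma hbound Gamma g a : curveH Gamma g -> exists M1 M2, forall x, Gamma x -> M1 <= hh a x <= M2.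
Proof.
  intros HC. pose proof HC as [Hc [Hp [Hi HG]]].
  assert (CF := cont_hh g a 0 Hc).
  destruct (continuity_ab_maj _ 0 1 ltac:(lra) (fun c _ => CF c)) as [t1 [H1 _]].
  destruct (continuity_ab_min _ 0 1 ltac:(lra) (fun c _ => CF c)) as [t2 [H2 _]].
  exists (hh a (g t2) + 0), (hh a (g t1) + 0). intros x Gx.
  destruct (param Gamma g x HC Gx) as [t [Ht Et]]. subst x.
  specialize (H1 t ltac:(lra)); specialize (H2 t ltac:(lra)). lra.
Qed.

Lemma dist_Pt a c h1 h2 : a <> (0,0) ->
  Rsqr (fst (Pt a c h1) - fst (Pt a c h2)) + Rsqr (snd (Pt a c h1) - snd (Pt a c h2)) =
  (h1 - h2) * (h1 - h2) / Nn a.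
Proof.
  intros Ha. pose proof (Nn_pos a Ha). unfold Pt, Rsqr, Nn in *; destruct a; simpl in *. field; lra.
Qed.

Lemma Pt_eq a x : a <> (0,0) -> x = Pt a (dot a x) (hh a x).
Proof. intros Ha. apply (pt_fh a); auto; rewrite ?dot_Pt, ?hh_Pt; auto. Qed.

Lemma step1 Gamma g a c :
  curveH Gamma g -> sixH Gamma -> a <> (0,0) -> (forall w, Gamma w -> dot a w <= c) ->
  (exists x, Gamma x /\ dot a x = c) ->
  exists al be, al <= be /\ forall x, (Gamma x /\ dot a x = c) <-> (dot a x = c /\ al <= hh a x <= be).
Proof.
  intros HC H6 Ha Hup [x0 [G0 F0]].
  pose proof HC as [Hc [Hp [Hi HG]]].
  destruct (hbound Gamma g a HC) as [M1 [M2 HM]].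
  set (E := fun r => exists x, Gamma x /\ dot a x = c /\ r = hh a x).
  set (E' := fun r => exists x, Gamma x /\ dot a x = c /\ r = - hh a x).
  destruct (completeness E) as [be [Hbe1 Hbe2]].
  { exists M2. intros r [x [Gx [_ ->]]]. apply HM; auto. }
  { exists (hh a x0); exists x0; auto. }
  destruct (completeness E') as [al' [Hal1 Hal2]].
  { exists (- M1). intros r [x [Gx [_ ->]]]. specialize (HM x Gx); lra. }
  { exists (- hh a x0); exists x0; auto. }
  assert (Hfw : forall x, Gamma x -> dot a x = c -> - al' <= hh a x <= be).
  { intros x Gx Fx. split.
    - assert (- hh a x <= al') by (apply Hal1; exists x; auto). lra.
    - apply Hbe1; exists x; auto. }
  pose proof (Hfw x0 G0 F0) as H0.
  assert (Inner : forall x, dot a x = c -> - al' < hh a x < be -> Gamma x).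
  { intros x Fx [L1 L2].
    assert (Y1 : exists y, Gamma y /\ dot a y = c /\ hh a y < hh a x).
    { apply NNPP; intros Hn. assert (al' <= - hh a x).
      { apply Hal2. intros r [y [Gy [Fy ->]]].
        destruct (Rlt_or_le (hh a y) (hh a x)); [exfalso; apply Hn; eauto|lra]. }
      lra. }
    assert (Y2 : exists y, Gamma y /\ dot a y = c /\ hh a x < hh a y).
    { apply NNPP; intros Hn. assert (be <= hh a x).
      { apply Hbe2. intros r [y [Gy [Fy ->]]].
        destruct (Rlt_or_le (hh a x) (hh a y)); [exfalso; apply Hn; eauto|lra]. }
      lra. }
    destruct Y1 as [y1 [Gy1 [Fy1 Hy1]]]. destruct Y2 as [y2 [Gy2 [Fy2 Hy2]]].
    apply (step1_conv Gamma g a c y1 y2 x); auto. }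
  exists (- al'), be. split; [lra|].
  intros x; split.
  - intros [Gx Fx]; split; auto.
  - intros [Fx Hx]. split; auto.
    apply (gamma_closed Gamma g Hc Hp HG). intros eps Heps.
    destruct (Req_dec (- al') be) as [Eq|Neq].
    + exists x. split.
      * replace x with x0; auto. apply (pt_fh a); auto; lra.
      * unfold dist2. rewrite !Rminus_diag, Rsqr_0, Rplus_0_r, sqrt_0; auto.
    + pose proof (Nn_pos a Ha) as HN.
      set (rho := eps * Nn a / (Nn a + 1)).
      assert (Hrho : 0 < rho) by (unfold rho; apply Rdiv_lt_0_compat; nra).
      set (mid := (- al' + be) / 2).
      assert (Ex : exists s, - al' < s < be /\ Rabs (s - hh a x) <= rho).
      { destruct (Rle_or_lt (hh a x) mid) as [Lm|Lm].
        - exists (hh a x + Rmin rho ((be - hh a x) / 2)).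
          pose proof (Rmin_l rho ((be - hh a x) / 2)). pose proof (Rmin_r rho ((be - hh a x) / 2)).
          assert (0 < Rmin rho ((be - hh a x) / 2)) by (apply Rmin_glb_lt; unfold mid in *; lra).
          split; [unfold mid in *; lra|].
          replace (hh a x + Rmin rho ((be - hh a x) / 2) - hh a x) with (Rmin rho ((be - hh a x) / 2)) by ring.
          rewrite Rabs_right; lra.
        - exists (hh a x - Rmin rho ((hh a x + al') / 2)).
          pose proof (Rmin_l rho ((hh a x + al') / 2)). pose proof (Rmin_r rho ((hh a x + al') / 2)).
          assert (0 < Rmin rho ((hh a x + al') / 2)) by (apply Rmin_glb_lt; unfold mid in *; lra).
          split; [unfold mid in *; lra|].
          replace (hh a x - Rmin rho ((hh a x + al') / 2) - hh a x) with (- Rmin rho ((hh a x + al') / 2)) by ring.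
          rewrite Rabs_Ropp, Rabs_right; lra. }
      destruct Ex as [s [Hs Hsr]].
      exists (Pt a c s). split.
      * apply Inner; rewrite ?dot_Pt, ?hh_Pt; auto.
      * assert (Exx : x = Pt a c (hh a x)) by (rewrite <- Fx; apply Pt_eq; auto).
        rewrite Exx at 1. unfold dist2. rewrite dist_Pt by auto.
        rewrite <- (sqrt_square eps) by lra.
        apply sqrt_lt_1_alt. split.
        { apply Rmult_le_pos; [apply Rle_0_sqr| left; apply Rinv_0_lt_compat; auto]. }
        assert (Sq : (hh a x - s) * (hh a x - s) <= rho * rho).
        { unfold Rabs in Hsr; destruct (Rcase_abs (s - hh a x)); nra. }
        apply Rle_lt_trans with (rho * rho / Nn a).
        { unfold Rdiv; apply Rmult_le_compat_r; [left; apply Rinv_0_lt_compat; auto | exact Sq]. }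
        unfold rho.
        replace (eps * Nn a / (Nn a + 1) * (eps * Nn a / (Nn a + 1)) / Nn a)
          with (eps * eps * (Nn a / ((Nn a + 1) * (Nn a + 1)))) by (field; lra).
        assert (Ht : Nn a / ((Nn a + 1) * (Nn a + 1)) < 1).
        { apply (Rmult_lt_reg_r ((Nn a + 1) * (Nn a + 1))); [nra|].
          unfold Rdiv; rewrite Rmult_assoc, Rinv_l, Rmult_1_r by nra; nra. }
        assert (0 < eps * eps) by nra. nra.
Qed.

Lemma len_le Gamma g a chi clo al be al' be' :
  curveH Gamma g -> sixH Gamma -> a <> (0,0) -> clo < chi ->
  (forall x, Gamma x -> clo <= dot a x <= chi) ->
  (forall x, dot a x = chi -> al <= hh a x <= be -> Gamma x) -> al <= be ->
  (forall x, Gamma x -> dot a x = clo -> al' <= hh a x <= be') ->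
  (exists b, Gamma b /\ dot a b = clo) ->
  be - al <= be' - al'.
Proof.
  intros HC H6 Ha Hcl Hstrip Htop Hab Hbot [b [Gb Fb]].
  pose proof HC as [Hc [Hp [Hi HG]]].
  destruct (Rle_or_lt (be - al) (be' - al')) as [|Hlt]; auto. exfalso.
  pose proof (Hbot b Gb Fb) as Hb'.
  set (del := ((be - al) - (be' - al')) / 4).
  set (mid := (al' + be') / 2).
  set (rad := (be' - al') / 2 + del).
  set (F2 := fun t => hh a (g t) + - mid).
  set (Z := fun t => rad - Rabs (F2 t)).
  assert (CZ : continuity Z).
  { assert (C := continuity_minus _ _ (continuity_const (fun _ => rad) ltac:(intros ? ?; reflexivity))
       (continuity_comp _ _ (cont_hh g a (- mid) Hc) Rcontinuity_abs)).
    apply (cont_ext _ _ C). intros; reflexivity. }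
  set (Phi := fun t => (dot a (g t) + - clo) + (Z t + Rabs (Z t)) / 2).
  assert (CPhi : continuity Phi).
  { assert (C := continuity_plus _ _ (cont_dot g a (- clo) Hc)
       (continuity_scal _ (/2) (continuity_plus _ _ CZ (continuity_comp _ _ CZ Rcontinuity_abs)))).
    apply (cont_ext _ _ C). intros; unfold Phi, plus_fct, mult_real_fct, comp; simpl. field. }
  assert (ZA : forall t, 0 <= (Z t + Rabs (Z t)) / 2).
  { intros t. unfold Rabs; destruct (Rcase_abs (Z t)); lra. }
  assert (Ppos : forall t, 0 < Phi t).
  { intros t. assert (Gt : Gamma (g t)) by (apply HG; eauto).
    destruct (Hstrip _ Gt) as [S1 S2]. unfold Phi.
    destruct (Rle_lt_or_eq_dec _ _ S1) as [L|E].
    - specialize (ZA t). lra.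
    - pose proof (Hbot _ Gt (eq_sym E)) as Hh.
      assert (Zp : del <= Z t).
      { unfold Z, F2, rad, mid. unfold Rabs; destruct (Rcase_abs (hh a (g t) + - ((al' + be') / 2))); lra. }
      assert (0 < del) by (unfold del; lra).
      rewrite Rabs_right by lra. lra. }
  destruct (continuity_ab_min Phi 0 1 ltac:(lra) (fun c _ => CPhi c)) as [t0 [Hmin Ht0]].
  set (eps0 := Phi t0).
  assert (He0 : 0 < eps0) by apply Ppos.
  assert (Hall : forall t, eps0 <= Phi t).
  { intros t. destruct (per_red g Hp t) as [s [Hs Es]].
    replace (Phi t) with (Phi s) by (unfold Phi, Z, F2; rewrite Es; reflexivity). apply Hmin; lra. }
  set (c0 := clo + Rmin eps0 (chi - clo) / 2).
  assert (Hc0 : clo < c0 < chi /\ c0 - clo < eps0).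
  { pose proof (Rmin_l eps0 (chi - clo)); pose proof (Rmin_r eps0 (chi - clo)).
    assert (0 < Rmin eps0 (chi - clo)) by (apply Rmin_glb_lt; lra). unfold c0; lra. }
  set (p := Pt a chi al). set (q := Pt a chi be). set (m := Pt a chi ((al + be) / 2)).
  assert (Gp : Gamma p) by (apply Htop; unfold p; rewrite ?dot_Pt, ?hh_Pt; auto; lra).
  assert (Gq : Gamma q) by (apply Htop; unfold q; rewrite ?dot_Pt, ?hh_Pt; auto; lra).
  assert (Gm : Gamma m) by (apply Htop; unfold m; rewrite ?dot_Pt, ?hh_Pt; auto; lra).
  destruct (param Gamma g p HC Gp) as [tp [Htp Ep]].
  destruct (param Gamma g b HC Gb) as [tb [Htb Eb]].
  set (F := fun t => dot a (g t) + - c0).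
  assert (CF : continuity F) by apply cont_dot, Hc.
  assert (PF : forall t, F (t + 1) = F t) by (intros; unfold F; rewrite Hp; reflexivity).
  assert (Pr : F tp * F tb < 0).
  { unfold F; rewrite Ep, Eb. unfold p; rewrite dot_Pt by auto. nra. }
  destruct (two_cross g F Hp Hi CF PF tp tb Htp Htb Pr) as [z1 [z2 [F1 [F2' Ne]]]].
  unfold F in F1, F2'.
  assert (Gu : Gamma (g z1)) by (apply HG; eauto).
  assert (Gv : Gamma (g z2)) by (apply HG; eauto).
  assert (Nh : hh a (g z1) <> hh a (g z2)).
  { intros E. apply Ne. apply (pt_fh a); auto; lra. }
  assert (Close : forall t, dot a (g t) = c0 -> Rabs (hh a (g t) + - mid) < rad).
  { intros t Ft. pose proof (Hall t) as H. unfold Phi in H. rewrite Ft in H.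
    assert (Zp : 0 < Z t).
    { destruct (Rle_or_lt (Z t) 0) as [L|L]; auto. rewrite Rabs_left1 in H by auto. lra. }
    unfold Z, F2 in Zp. lra. }
  pose proof (Close z1 ltac:(lra)) as C1. pose proof (Close z2 ltac:(lra)) as C2.
  apply Rabs_def2 in C1. apply Rabs_def2 in C2.
  assert (Hd : Rabs (hh a (g z1) - hh a (g z2)) < hh a q - hh a p).
  { unfold p, q; rewrite !hh_Pt by auto. apply Rabs_def1; unfold rad, del in *; lra. }
  destruct (getK Gamma g [p; q; m; g z1; g z2; b] HC H6) as [K [HK [[o Ho] Hbd]]].
  { simpl; lia. }
  { intros x Hx; simpl in Hx; repeat destruct Hx as [<-|Hx]; auto; contradiction. }
  destruct (Hbd p ltac:(simpl; auto)) as [Kp _].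
  destruct (Hbd q ltac:(simpl; auto)) as [Kq _].
  destruct (Hbd m ltac:(simpl; auto)) as [Km Nm].
  destruct (Hbd (g z1) ltac:(simpl; auto 6)) as [Ku Nu].
  destruct (Hbd (g z2) ltac:(simpl; auto 6)) as [Kv Nv].
  destruct (Hbd b ltac:(simpl; auto 7)) as [Kb _].
  apply (chord K a chi c0 p q m (g z1) (g z2) b o HK Ha Ho Kp Kq Km Ku Kv Kb Nm Nu Nv); auto.
  - unfold p; apply dot_Pt; auto.
  - unfold q; apply dot_Pt; auto.
  - unfold m; apply dot_Pt; auto.
  - unfold p, q, m; rewrite !hh_Pt by auto. lra.
  - lra.
  - lra.
  - lra.
  - lra.
Qed.

Lemma seg_Pt a c al be x : a <> (0,0) -> al <= be ->
  (segment (Pt a c al) (Pt a c be) x <-> (dot a x = c /\ al <= hh a x <= be)).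
Proof.
  intros Ha Hab. split.
  - intros [t [Ht ->]]. change (padd (pscale (1 - t) (Pt a c al)) (pscale t (Pt a c be)))
      with (comb t (Pt a c al) (Pt a c be)).
    rewrite dot_comb, hh_comb, !dot_Pt, !hh_Pt by auto. split; [ring| split; nra].
  - intros [Fx Hx]. destruct (Req_dec al be) as [E|E].
    + exists 0. split; [lra|]. change (x = comb 0 (Pt a c al) (Pt a c be)).
      apply (pt_fh a); auto; rewrite ?dot_comb, ?hh_comb, ?dot_Pt, ?hh_Pt by auto; subst; lra.
    + exists ((hh a x - al) / (be - al)). split.
      * split; [apply Rmult_le_pos; [lra| left; apply Rinv_0_lt_compat; lra]|].
        apply (Rmult_le_reg_r (be - al)); [lra|].
        unfold Rdiv; rewrite Rmult_assoc, Rinv_l, Rmult_1_r by lra. lra.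
      * change (x = comb ((hh a x - al) / (be - al)) (Pt a c al) (Pt a c be)).
        apply (pt_fh a); auto; rewrite ?dot_comb, ?hh_comb, ?dot_Pt, ?hh_Pt by auto.
        -- rewrite Fx; ring.
        -- field; lra.
Qed.

Lemma dist_eq a c c' al be al' be' : be - al = be' - al' ->
  dist2 (Pt a c al) (Pt a c be) = dist2 (Pt a c' al') (Pt a c' be').
Proof.
  intros E. unfold dist2, Pt; simpl.
  assert (E1 : be = be' - al' + al) by lra. subst be.
  unfold Rdiv. f_equal. f_equal; f_equal; ring.
Qed.

Definition negp (a : pt) : pt := (- fst a, - snd a).
Lemma dot_neg a x : dot (negp a) x = - dot a x.
Proof. unfold dot, negp; simpl; ring. Qed.
Lemma hh_neg a x : hh (negp a) x = - hh a x.
Proof. unfold hh, negp; simpl; ring. Qed.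
Lemma negp_nz a : a <> (0,0) -> negp a <> (0,0).
Proof.
  destruct a as [a1 a2]; unfold negp; simpl; intros H E; injection E as E1 E2; apply H; f_equal; lra.
Qed.

Lemma core Gamma g a chi clo :
  curveH Gamma g -> sixH Gamma -> a <> (0,0) -> clo < chi ->
  (forall x, Gamma x -> clo <= dot a x <= chi) ->
  (exists x, Gamma x /\ dot a x = chi) -> (exists x, Gamma x /\ dot a x = clo) ->
  exists p q p' q',
    (forall x, (dot a x = chi /\ Gamma x) <-> segment p q x) /\
    (forall x, (dot a x = clo /\ Gamma x) <-> segment p' q' x) /\
    dist2 p q = dist2 p' q'.
Proof.
  intros HC H6 Ha Hcl Hs Htop Hbot.
  destruct (step1 Gamma g a chi HC H6 Ha) as [al [be [Hab Hseg]]].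
  { intros w Gw; apply Hs; auto. } { auto. }
  destruct (step1 Gamma g (negp a) (- clo) HC H6 (negp_nz a Ha)) as [al2 [be2 [Hab2 Hseg2]]].
  { intros w Gw; rewrite dot_neg; specialize (Hs w Gw); lra. }
  { destruct Hbot as [x [Gx Fx]]; exists x; rewrite dot_neg; split; auto; lra. }
  assert (L1 : be - al <= (- al2) - (- be2)).
  { apply (len_le Gamma g a chi clo al be (- be2) (- al2) HC H6 Ha Hcl Hs); auto.
    - intros x Fx Hx. apply Hseg; auto.
    - intros x Gx Fx. destruct (Hseg2 x) as [A _].
      rewrite dot_neg, hh_neg in A. assert (I : Gamma x /\ - dot a x = - clo) by (split; [auto|lra]).
      destruct (A I) as [_ B]. lra. }
  assert (L2 : be2 - al2 <= (- al) - (- be)).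
  { apply (len_le Gamma g (negp a) (- clo) (- chi) al2 be2 (- be) (- al) HC H6 (negp_nz a Ha)); try lra.
    - intros x Gx; rewrite dot_neg; specialize (Hs x Gx); lra.
    - intros x Fx Hx. apply Hseg2; auto.
    - intros x Gx Fx. rewrite dot_neg in Fx. destruct (Hseg x) as [A _].
      rewrite hh_neg. assert (I : Gamma x /\ dot a x = chi) by (split; [auto|lra]).
      destruct (A I) as [_ B]. lra.
    - destruct Htop as [x [Gx Fx]]; exists x; rewrite dot_neg; split; auto; lra. }
  exists (Pt a chi al), (Pt a chi be), (Pt a clo (- be2)), (Pt a clo (- al2)).
  split; [|split].
  - intros x. rewrite seg_Pt by auto. rewrite <- Hseg. tauto.
  - intros x. rewrite seg_Pt by (auto; lra). split.
    + intros [Fx Gx]. destruct (Hseg2 x) as [A _]. rewrite dot_neg, hh_neg in A.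
      assert (I : Gamma x /\ - dot a x = - clo) by (split; [auto|lra]).
      destruct (A I) as [_ B]. split; auto; lra.
    + intros [Fx Hx]. destruct (Hseg2 x) as [_ A]. rewrite dot_neg, hh_neg in A.
      assert (I : - dot a x = - clo /\ al2 <= - hh a x <= be2) by (split; lra).
      destruct (A I) as [Gx _]. auto.
  - apply dist_eq. lra.
Qed.

Lemma side_conv (Gamma l : pt -> Prop) a c a1 c1 :
  a <> (0,0) -> a1 <> (0,0) ->
  (forall p, l p <-> dot a p = c) -> (forall p, l p <-> dot a1 p = c1) ->
  ((forall p, Gamma p -> dot a1 p <= c1) \/ (forall p, Gamma p -> c1 <= dot a1 p)) ->
  (forall x, Gamma x -> dot a x <= c) \/ (forall x, Gamma x -> c <= dot a x).
Proof.
  intros Ha Ha1 Hl Hl1 Hside.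
  pose proof (Nn_pos a Ha) as HN.
  assert (P0 : dot a1 (Pt a c 0) = c1) by (apply Hl1, Hl, dot_Pt; auto).
  assert (P1 : dot a1 (Pt a c 1) = c1) by (apply Hl1, Hl, dot_Pt; auto).
  destruct a as [u1 u2], a1 as [w1 w2]. unfold dot, Pt, Nn in *; simpl in *.
  set (N := u1 * u1 + u2 * u2) in *.
  assert (Hx : w2 * u1 = w1 * u2).
  { assert (E : w1 * ((u1 * c - u2 * 1) / N) + w2 * ((u2 * c + u1 * 1) / N)
              - (w1 * ((u1 * c - u2 * 0) / N) + w2 * ((u2 * c + u1 * 0) / N)) = (w2 * u1 - w1 * u2) / N)
      by (field; lra).
    rewrite P0, P1 in E. replace (c1 - c1) with 0 in E by ring.
    assert (E' : (w2 * u1 - w1 * u2) = 0).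
    { apply (Rmult_eq_reg_r (/ N)); [|apply Rinv_neq_0_compat; lra]. rewrite Rmult_0_l. unfold Rdiv in E. lra. }
    lra. }
  set (k := (w1 * u1 + w2 * u2) / N).
  assert (K1 : w1 = k * u1).
  { unfold k. apply (Rmult_eq_reg_r N); [|lra].
    replace ((w1 * u1 + w2 * u2) / N * u1 * N) with ((w1 * u1 + w2 * u2) * u1) by (field; lra).
    unfold N. replace ((w1 * u1 + w2 * u2) * u1) with (w1 * u1 * u1 + (w2 * u1) * u2) by ring.
    rewrite Hx. ring. }
  assert (K2 : w2 = k * u2).
  { unfold k. apply (Rmult_eq_reg_r N); [|lra].
    replace ((w1 * u1 + w2 * u2) / N * u2 * N) with ((w1 * u1 + w2 * u2) * u2) by (field; lra).
    unfold N. replace ((w1 * u1 + w2 * u2) * u2) with ((w1 * u2) * u1 + w2 * u2 * u2) by ring.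
    rewrite <- Hx. ring. }
  assert (Kc : c1 = k * c).
  { rewrite <- P0. unfold k. field. lra. }
  assert (Kn : k <> 0).
  { intros E. apply Ha1. rewrite K1, K2, E. f_equal; ring. }
  assert (Rel : forall x1 x2, w1 * x1 + w2 * x2 - c1 = k * (u1 * x1 + u2 * x2 - c)).
  { intros. rewrite K1, K2, Kc. ring. }
  assert (M1 : forall t, 0 < k -> k * t <= 0 -> t <= 0).
  { intros t Hk Ht. destruct (Rle_or_lt t 0); auto. assert (0 < k * t) by (apply Rmult_lt_0_compat; lra). lra. }
  assert (M2 : forall t, k < 0 -> k * t <= 0 -> 0 <= t).
  { intros t Hk Ht. destruct (Rle_or_lt 0 t); auto. assert (0 < k * t) by nra. lra. }
  destruct (Rlt_or_le 0 k) as [Kp|Kneg]; destruct Hside as [S|S].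
  - left. intros [x1 x2] G. specialize (S _ G). simpl in S |- *. specialize (Rel x1 x2).
    assert (T := M1 (u1 * x1 + u2 * x2 - c) Kp ltac:(lra)). lra.
  - right. intros [x1 x2] G. specialize (S _ G). simpl in S |- *. specialize (Rel x1 x2).
    assert (T := M1 (- (u1 * x1 + u2 * x2 - c)) Kp ltac:(lra)). lra.
  - right. intros [x1 x2] G. specialize (S _ G). simpl in S |- *. specialize (Rel x1 x2).
    assert (T := M2 (u1 * x1 + u2 * x2 - c) ltac:(lra) ltac:(lra)). lra.
  - left. intros [x1 x2] G. specialize (S _ G). simpl in S |- *. specialize (Rel x1 x2).
    assert (T := M2 (- (u1 * x1 + u2 * x2 - c)) ltac:(lra) ltac:(lra)). lra.
Qed.

Theorem mainTheorem8 (Gamma : pt -> Prop) :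
  simple_closed_curve Gamma ->
  (forall ps : list pt, length ps = 6%nat -> NoDup ps ->
     (forall p, In p ps -> Gamma p) -> csc_position (fun x => In x ps)) ->
  forall l l' : pt -> Prop,
    supporting_line l Gamma -> supporting_line l' Gamma ->
    parallel l l' -> ~ same_set l l' ->
    exists p q p' q' : pt,
      (forall x, (l x /\ Gamma x) <-> segment p q x) /\
      (forall x, (l' x /\ Gamma x) <-> segment p' q' x) /\
      dist2 p q = dist2 p' q'.
Proof.
  intros [g [Hc [Hp [Hi HG]]]] H6 l l' [_ [[x0 [lx0 Gx0]] [a1 [c1 [Ha1 [Hl1 Hs1]]]]]]
    [_ [[y0 [ly0 Gy0]] [a2 [c2 [Ha2 [Hl2 Hs2]]]]]] [a [c [c' [Ha [Hl Hl']]]]] Hne.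
  assert (HC : curveH Gamma g) by exact (conj Hc (conj Hp (conj Hi HG))).
  assert (H6' : sixH Gamma) by exact H6.
  pose proof (side_conv Gamma l a c a1 c1 Ha Ha1 Hl Hl1 Hs1) as S1.
  pose proof (side_conv Gamma l' a c' a2 c2 Ha Ha2 Hl' Hl2 Hs2) as S2.
  assert (F0 : dot a x0 = c) by (apply Hl; auto).
  assert (F1 : dot a y0 = c') by (apply Hl'; auto).
  assert (Ncc : c <> c').
  { intros E; apply Hne. intros p. rewrite Hl, Hl', E. tauto. }
  destruct (Rlt_or_le c c') as [L|L].
  - assert (Str : forall x, Gamma x -> c <= dot a x <= c').
    { intros x Gx. split.
      - destruct S1 as [S|S]; [specialize (S y0 Gy0); lra | auto].
      - destruct S2 as [S|S]; [auto | specialize (S x0 Gx0); lra]. }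
    destruct (core Gamma g a c' c HC H6' Ha L Str) as [p [q [p' [q' [A [B D]]]]]].
    { exists y0; auto. } { exists x0; auto. }
    exists p', q', p, q. split; [|split; [|auto]].
    + intros x. rewrite Hl. apply B.
    + intros x. rewrite Hl'. apply A.
  - assert (L' : c' < c) by lra.
    assert (Str : forall x, Gamma x -> c' <= dot a x <= c).
    { intros x Gx. split.
      - destruct S2 as [S|S]; [specialize (S x0 Gx0); lra | auto].
      - destruct S1 as [S|S]; [auto | specialize (S y0 Gy0); lra]. }
    destruct (core Gamma g a c c' HC H6' Ha L' Str) as [p [q [p' [q' [A [B D]]]]]].
    { exists x0; auto. } { exists y0; auto. }
    exists p, q, p', q'. split; [|split; [|auto]].
    + intros x. rewrite Hl. apply A.
    + intros x. rewrite Hl'. apply B.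
Qed.
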